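(* Let ${\bf S}$ be any logic over $For$ (a consequence relation $\vdash_{\bf S}$) lying between ${\bf Km}$ and ${\bf T45m}$, i.e. $\Gamma\vdash_{\bf Km}\alpha$ implies $\Gamma\vdash_{\bf S}\alpha$, and $\Gamma\vdash_{\bf S}\alpha$ implies $\Gamma\vdash_{\bf T45m}\alpha$, for all $\Gamma\cup\{\alpha\}\subseteq For$. Then ${\bf S}$ cannot be characterized by a single finite deterministic logical matrix; that is, there is no logical matrix $\mathcal M=\langle M,D\rangle$ with $M$ finite such that, for all $\Gamma\cup\{\alpha\}\subseteq For$, $\Gamma\vdash_{\bf S}\alpha$ iff $\Gamma\vDash_{\mathcal M}\alpha$.
   Context: Formulas are built from a denumerable set of propositional variables by the unary connectives $\neg$, $\Box$ and the binary connective $\to$; $For$ is the set of all formulas. Abbreviations: $\Diamond\alpha:=\neg\Box\neg\alpha$, $\alpha\vee\beta:=\neg\alpha\to\beta$, $\alpha\wedge\beta:=\neg(\alpha\to\neg\beta)$. All Hilbert calculi below have as axioms all instances (over $For$) of the axiom schemas of a standard Hilbert calculus for classical propositional logic in the signature $\{\neg,\to\}$, plus the listed modal schemas, with modus ponens as the only rule; $\Gamma\vdash_{\bf L}\alpha$ means there is a derivation of $\alpha$ from $\Gamma$ in ${\bf L}$. ${\bf Km}$: (K') $\Diamond\alpha\to(\Box(\alpha\to\beta)\to(\Box\alpha\to\Box\beta))$; (K1') $\Diamond\neg\beta\to(\Box(\alpha\to\beta)\to(\Diamond\alpha\to\Diamond\beta))$; (K2') $\Diamond\alpha\to(\Diamond(\alpha\to\beta)\to(\Box\alpha\to\Diamond\beta))$;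 (M3') $(\Diamond\alpha\vee\Diamond\neg\alpha)\to(\Diamond\beta\to\Diamond(\alpha\to\beta))$; (M4') $\Diamond\neg\beta\to(\Diamond\neg\alpha\to\Diamond(\alpha\to\beta))$; (I1) $(\Box\alpha\wedge\Box\neg\alpha)\to(\Box(\alpha\to\beta)\wedge\Box\neg(\alpha\to\beta))$; (I2) $(\Box\beta\wedge\Box\neg\beta)\to(\Box(\alpha\to\beta)\wedge\Box\neg(\alpha\to\beta))$; (M1) $\neg\Diamond\alpha\to\Box(\alpha\to\beta)$; (M2) $\Box\beta\to\Box(\alpha\to\beta)$; (DN1) $\Box\alpha\to\Box\neg\neg\alpha$; (DN2) $\Box\neg\neg\alpha\to\Box\alpha$. ${\bf T45m}$: (K) $\Box(\alpha\to\beta)\to(\Box\alpha\to\Box\beta)$; (K1) $\Box(\alpha\to\beta)\to(\Diamond\alpha\to\Diamond\beta)$; (K2) $\Diamond(\alpha\to\beta)\to(\Box\alpha\to\Diamond\beta)$; (M1); (M2); (M3) $\Diamond\beta\to\Diamond(\alpha\to\beta)$; (M4) $\Diamond\neg\alpha\to\Diamond(\alpha\to\beta)$; (T) $\Box\alpha\to\alpha$; (DN1); (DN2); (4) $\Box\alpha\to\Box\Box\alpha$; (5) $\Diamond\Box\alpha\to\Box\alpha$. A (deterministic) logical matrix $\mathcal M=\langle M,D\rangle$ consists of a set $M$ with unary operations for $\neg,\Box$ and a binary operation for $\to$, and $D\subseteq M$; valuations are homomorphisms $h:For\to M$, and $\Gamma\vDash_{\mathcal M}\alpha$ iff every valuation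 mapping $\Gamma$ into $D$ maps $\alpha$ into $D$. *)

(* Defs.v *)
From Stdlib Require Import List.





Inductive For : Type :=
  | Var : nat -> For
  | Neg : For -> For
  | Box : For -> For
  | Imp : For -> For -> For.

Definition Dia (a : For) : For := Neg (Box (Neg a)).
Definition Or (a b : For) : For := Imp (Neg a) b.
Definition And (a b : For) : For := Neg (Imp a (Neg b)).

(* A standard Hilbert calculus for classical propositional logic in {~, ->}
   (Mendelson's axioms A1-A3, with modus ponens). *)
Inductive CPL_ax : For -> Prop :=
  | ax_A1 a b : CPL_ax (Imp a (Imp b a))
  | ax_A2 a b c : CPL_ax (Imp (Imp a (Imp b c)) (Imp (Imp a b) (Imp a c)))
  | ax_A3 a b : CPL_ax (Imp (Imp (Neg b) (Neg a)) (Imp (Imp (Neg b) a) b)).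

Inductive Km_modal_ax : For -> Prop :=
  | Km_K' a b : Km_modal_ax (Imp (Dia a) (Imp (Box (Imp a b)) (Imp (Box a) (Box b))))
  | Km_K1' a b : Km_modal_ax (Imp (Dia (Neg b)) (Imp (Box (Imp a b)) (Imp (Dia a) (Dia b))))
  | Km_K2' a b : Km_modal_ax (Imp (Dia a) (Imp (Dia (Imp a b)) (Imp (Box a) (Dia b))))
  | Km_M3' a b : Km_modal_ax (Imp (Or (Dia a) (Dia (Neg a))) (Imp (Dia b) (Dia (Imp a b))))
  | Km_M4' a b : Km_modal_ax (Imp (Dia (Neg b)) (Imp (Dia (Neg a)) (Dia (Imp a b))))
  | Km_I1 a b : Km_modal_ax (Imp (And (Box a) (Box (Neg a)))
                               (And (Box (Imp a b)) (Box (Neg (Imp a b)))))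
  | Km_I2 a b : Km_modal_ax (Imp (And (Box b) (Box (Neg b)))
                               (And (Box (Imp a b)) (Box (Neg (Imp a b)))))
  | Km_M1 a b : Km_modal_ax (Imp (Neg (Dia a)) (Box (Imp a b)))
  | Km_M2 a b : Km_modal_ax (Imp (Box b) (Box (Imp a b)))
  | Km_DN1 a : Km_modal_ax (Imp (Box a) (Box (Neg (Neg a))))
  | Km_DN2 a : Km_modal_ax (Imp (Box (Neg (Neg a))) (Box a)).

Inductive T45m_modal_ax : For -> Prop :=
  | T_K a b : T45m_modal_ax (Imp (Box (Imp a b)) (Imp (Box a) (Box b)))
  | T_K1 a b : T45m_modal_ax (Imp (Box (Imp a b)) (Imp (Dia a) (Dia b)))
  | T_K2 a b : T45m_modal_ax (Imp (Dia (Imp a b)) (Imp (Box a) (Dia b)))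
  | T_M1 a b : T45m_modal_ax (Imp (Neg (Dia a)) (Box (Imp a b)))
  | T_M2 a b : T45m_modal_ax (Imp (Box b) (Box (Imp a b)))
  | T_M3 a b : T45m_modal_ax (Imp (Dia b) (Dia (Imp a b)))
  | T_M4 a b : T45m_modal_ax (Imp (Dia (Neg a)) (Dia (Imp a b)))
  | T_T a : T45m_modal_ax (Imp (Box a) a)
  | T_DN1 a : T45m_modal_ax (Imp (Box a) (Box (Neg (Neg a))))
  | T_DN2 a : T45m_modal_ax (Imp (Box (Neg (Neg a))) (Box a))
  | T_4 a : T45m_modal_ax (Imp (Box a) (Box (Box a)))
  | T_5 a : T45m_modal_ax (Imp (Dia (Box a)) (Box a)).

Definition Km_ax (f : For) : Prop := CPL_ax f \/ Km_modal_ax f.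
Definition T45m_ax (f : For) : Prop := CPL_ax f \/ T45m_modal_ax f.

Inductive derives (Ax : For -> Prop) (Gamma : For -> Prop) : For -> Prop :=
  | d_hyp a : Gamma a -> derives Ax Gamma a
  | d_ax a : Ax a -> derives Ax Gamma a
  | d_mp a b : derives Ax Gamma a -> derives Ax Gamma (Imp a b) -> derives Ax Gamma b.

Definition Km_derives := derives Km_ax.
Definition T45m_derives := derives T45m_ax.

Record matrix := Matrix {
  carrier : Type;
  mneg : carrier -> carrier;
  mbox : carrier -> carrier;
  mimp : carrier -> carrier -> carrier;
  designated : carrier -> Prop
}.

Definition valuation (M : matrix) (h : For -> carrier M) : Prop :=
  (forall a, h (Neg a) = mneg M (h a)) /\
  (forall a, h (Box a) = mbox M (h a)) /\
  (forall a b, h (Imp a b) = mimp M (h a) (h b)).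

Definition matrix_conseq (M : matrix) (Gamma : For -> Prop) (alpha : For) : Prop :=
  forall h : For -> carrier M, valuation M h ->
    (forall g, Gamma g -> designated M (h g)) -> designated M (h alpha).

Definition finite_matrix (M : matrix) : Prop :=
  exists l : list (carrier M), forall x : carrier M, List.In x l.

(* Main.v *)
Require Import Defs.
From Stdlib Require Import List Classical Lia FinFun.
Import ListNotations.

Fixpoint tr (w : nat) (a : For) : Prop :=
  match a with
  | Var k => k = S w
  | Neg a => ~ tr w a
  | Box a => forall u, tr u a
  | Imp a b => tr w a -> tr w b
  end.

Lemma T45m_ax_valid : forall a, T45m_ax a -> forall w, tr w a.
Proof.
  intros a [H|H]; destruct H; simpl; intros;
  repeat match goal with |- _ -> _ => intro end;
  try (apply NNPP; intro; firstorder fail);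
  try firstorder.
Qed.

Lemma T45m_sound (G : For -> Prop) a w :
  T45m_derives G a -> (forall g, G g -> tr w g) -> tr w a.
Proof.
  intros D HG; induction D.
  - auto.
  - apply T45m_ax_valid; auto.
  - simpl in IHD2; auto.
Qed.

Lemma pigeon {A} (l : list A) (f : nat -> A) (Hl : forall x, In x l) :
  exists i j, i <> j /\ f i = f j.
Proof.
  apply NNPP; intro H.
  assert (Hinj : FinFun.Injective f).
  { intros i j E; apply NNPP; intro N; apply H; eauto. }
  pose proof (FinFun.Injective_map_NoDup Hinj (seq_NoDup (S (length l)) 0)) as ND.
  assert (I : incl (map f (seq 0 (S (length l)))) l) by (intros x _; apply Hl).
  pose proof (NoDup_incl_length ND I) as Le.
  rewrite length_map, length_seq in Le. lia.
Qed.

Definition X (i : nat) := Box (Imp (Var (S i)) (Var (S i))).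
Definition psi (i j : nat) := Imp (X i) (Imp (X i) (Box (Imp (Var (S i)) (Var (S j))))).
Definition Gam (g : For) : Prop := exists i j, i <> j /\ g = Imp (psi i j) (Var 0).

Theorem mainTheorem4 (S : (For -> Prop) -> For -> Prop) :
  (forall (Gamma : For -> Prop) (alpha : For), Km_derives Gamma alpha -> S Gamma alpha) ->
  (forall (Gamma : For -> Prop) (alpha : For), S Gamma alpha -> T45m_derives Gamma alpha) ->
  ~ (exists M : matrix, finite_matrix M /\
       forall (Gamma : For -> Prop) (alpha : For), S Gamma alpha <-> matrix_conseq M Gamma alpha).
Proof.
  intros HKm HT [M [[l Hl] HM]].
  assert (Thm : forall a, Km_ax a -> forall h, valuation M h -> designated M (h a)).
  { intros a Ha h Hv. apply (proj1 (HM (fun _ => False) a)); auto.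
    apply HKm; apply d_ax; auto. intros g []. }
  assert (MP : forall a b h, valuation M h -> designated M (h a) ->
             designated M (h (Imp a b)) -> designated M (h b)).
  { intros a b h Hv Ha Hab.
    apply (proj1 (HM (fun x => x = a \/ x = Imp a b) b)); auto.
    - apply HKm. apply d_mp with a; apply d_hyp; auto.
    - intros g [->| ->]; auto. }
  assert (C : matrix_conseq M Gam (Var 0)).
  { intros h Hv HG.
    destruct (pigeon l (fun i => h (Var (Datatypes.S i))) Hl) as [i [j [Nij E]]].
    specialize (HG _ (ex_intro _ i (ex_intro _ j (conj Nij eq_refl)))).
    apply MP with (psi i i); auto.
    - apply Thm; auto. left. unfold psi. apply ax_A1.
    - destruct Hv as [Hn [Hb Hi]].
      unfold psi, X in *. rewrite !Hi, !Hb, !Hi in *. rewrite <- E in HG. exact HG. }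
  apply HM in C. apply HT in C.
  assert (F := T45m_sound _ _ 0 C). simpl in F.
  assert (0 = 1).
  { apply F; intros g [i [j [Nij ->]]]; simpl. intros H; exfalso.
    assert (K : forall u : nat, Datatypes.S i = Datatypes.S u -> Datatypes.S i = Datatypes.S u) by auto.
    specialize (H K K i eq_refl). apply Nij; injection H; auto. }
  discriminate.
Qed.
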